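(* Let $\mathbf k$ be a field of characteristic $2$ which is finite or algebraically closed, $V$ a $\mathbf k$-vector space of even dimension $D$ with a nondegenerate quadratic form $Q$, and assume there exists a $D/2$-dimensional subspace $S\subset V$ with $Q|_S=0$. Let $N\in\tilde{\mathcal M}_Q$. Then for any such $S$, $\dim\big(S/(S\cap(1+N)(S))\big)\equiv\dim\ker N\pmod 2$.
   Context: $\langle x,y\rangle=Q(x+y)-Q(x)-Q(y)$ (here alternating, since the characteristic is $2$), with radical $R$; $Q$ is nondegenerate if $Q|_R$ is injective (for $D$ even this forces $R=0$). $\tilde{\mathcal M}_Q$ is the set of nilpotent $N\in\mathrm{End}(V)$ with $Q(Nx)=-\langle x,Nx\rangle$ for all $x\in V$ (equivalently, $1+N$ is a unipotent element of the orthogonal group $O_Q$). *)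

(* Defs.v *)
From HB Require Import structures.
From mathcomp Require Import all_boot all_order all_algebra.
Set Implicit Arguments. Unset Strict Implicit. Unset Printing Implicit Defensive.
Import GRing.Theory.
Local Open Scope ring_scope.

(* V = 'rV[F]_D (row vectors); endomorphisms act on the right: x |-> x *m N. *)

Definition polar (F : fieldType) (D : nat) (Q : 'rV[F]_D -> F) (x y : 'rV[F]_D) : F :=
  Q (x + y) - Q x - Q y.

Definition is_quadratic_form (F : fieldType) (D : nat) (Q : 'rV[F]_D -> F) : Prop :=
  (forall (a : F) x, Q (a *: x) = a ^+ 2 * Q x) /\
  (forall (a : F) x y z, polar Q (a *: x + y) z = a * polar Q x z + polar Q y z) /\
  (forall (a : F) x y z, polar Q x (a *: y + z) = a * polar Q x y + polar Q x z).

Definition in_radical (F : fieldType) (D : nat) (Q : 'rV[F]_D -> F) (x : 'rV[F]_D) : Prop :=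
  forall y, polar Q x y = 0.

Definition qf_nondegenerate (F : fieldType) (D : nat) (Q : 'rV[F]_D -> F) : Prop :=
  forall x y, in_radical Q x -> in_radical Q y -> Q x = Q y -> x = y.

Definition in_tildeM (F : fieldType) (D : nat) (Q : 'rV[F]_D -> F) (N : 'M[F]_D) : Prop :=
  (exists k : nat, N ^+ k = 0) /\
  (forall x, Q (x *m N) = - polar Q x (x *m N)).

Definition finite_or_alg_closed (F : fieldType) : Prop :=
  (exists s : seq F, forall x : F, x \in s) \/ GRing.closed_field_axiom F.

(* Main.v *)
Require Import Defs.
From HB Require Import structures.
From mathcomp Require Import all_boot all_order all_algebra.
From mathcomp Require Import zify ring.
Set Implicit Arguments. Unset Strict Implicit. Unset Printing Implicit Defensive.
Import GRing.Theory.
Local Open Scope ring_scope.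



Definition bf (F : fieldType) n (A : 'M[F]_n) (x y : 'rV[F]_n) : F := (x *m A *m y^T) 0 0.

Lemma bfDl (F : fieldType) n (A : 'M[F]_n) x y z : bf A (x + y) z = bf A x z + bf A y z.
Proof. by rewrite /bf !mulmxDl mxE. Qed.
Lemma bfDr (F : fieldType) n (A : 'M[F]_n) x y z : bf A z (x + y) = bf A z x + bf A z y.
Proof. by rewrite /bf linearD /= mulmxDr mxE. Qed.

Lemma alt_skew (F : fieldType) n (A : 'M[F]_n) : (forall z, bf A z z = 0) ->
  forall x y, bf A x y = - bf A y x.
Proof.
move=> hA x y; have := hA (x + y).
rewrite bfDl !bfDr !hA add0r addr0 => /eqP; rewrite addr_eq0 => /eqP //.
Qed.

Lemma bf_delta (F : fieldType) n (A : 'M[F]_n) i j :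
  bf A (delta_mx 0 i) (delta_mx 0 j) = A i j.
Proof. by rewrite /bf trmx_delta -rowE -colE !mxE. Qed.

Lemma bfZr (F : fieldType) n (A : 'M[F]_n) c x y : bf A x (c *: y) = c * bf A x y.
Proof. by rewrite /bf linearZ /= -scalemxAr mxE. Qed.

Lemma bf_rank1 (F : fieldType) n (c : 'cV[F]_n) (r : 'rV[F]_n) z w :
  bf (c *m r) z w = (z *m c) 0 0 * (r *m w^T) 0 0.
Proof. by rewrite /bf !mulmxA -(mulmxA (z *m c)) mxE big_ord1. Qed.

Lemma rank_step (F : fieldType) m n p (X : 'M[F]_(m, n)) (w : 'rV_n) (M : 'M_(n, p)) :
  (X *m M <= (0 : 'M_p))%MS -> w *m M != 0 -> \rank (X + w)%MS = (\rank X).+1.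
Proof.
move=> hX hw; apply/eqP; rewrite eqn_leq; apply/andP; split.
  have h := mxrank_adds_leqif X w.
  rewrite (leq_trans (h : _ <= _)%N) // -[(\rank X).+1]addn1 leq_add2l rank_rV; by case: (w != 0).
apply: rank_ltmx; rewrite ltmxE addsmxSl /=; apply/negP => h.
have : (w <= X)%MS by apply: submx_trans h; rewrite addsmxSr.
move=> /(submxMr M) /submx_trans /(_ hX); rewrite submx0; exact/negP.
Qed.

Lemma bfDm (F : fieldType) n (A B : 'M[F]_n) x y : bf (A + B) x y = bf A x y + bf B x y.
Proof. by rewrite /bf mulmxDr mulmxDl mxE. Qed.
Lemma bfNm (F : fieldType) n (A : 'M[F]_n) x y : bf (- A) x y = - bf A x y.
Proof. by rewrite /bf mulmxN mulNmx mxE. Qed.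

Lemma bf_mx11 (F : fieldType) n (A : 'M[F]_n) x y : x *m A *m y^T = (bf A x y)%:M.
Proof. exact: mx11_scalar. Qed.

Lemma alt_even (F : fieldType) n (A : 'M[F]_n) : (forall z, bf A z z = 0) -> ~~ odd (\rank A).
Proof.
have [k] := ubnP (\rank A); elim: k A => // k IH A rk hA.
have [->|nz] := eqVneq A 0; first by rewrite mxrank0.
have /existsP[i /existsP[j Aij]] : [exists i, exists j, A i j != 0].
  apply: contraNT nz => /existsPn H; apply/eqP/matrixP=> i j.
  by move/existsPn: (H i) => /(_ j); rewrite negbK mxE => /eqP.
have skew := alt_skew hA.
pose u : 'rV[F]_n := delta_mx 0 i.
pose v : 'rV[F]_n := (A i j)^-1 *: delta_mx 0 j.
have huv : bf A u v = 1 by rewrite bfZr bf_delta mulVf.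
have hvu : bf A v u = -1 by rewrite skew huv.
set cu := A *m u^T; set cv := A *m v^T; set ru := u *m A; set rv := v *m A.
set A' := A - cv *m ru + cu *m rv.
have hA' : forall z, bf A' z z = 0.
  move=> z; rewrite /A' !bfDm bfNm !bf_rank1 hA /cu /cv /ru /rv !mulmxA.
  rewrite -!/(bf _ _ _) (skew u z) (skew v z).
  by rewrite mulrN mulrN opprK add0r mulrC subrr.
have mx1 : forall x y, x *m A *m y^T = (bf A x y)%:M by move=> x y; exact: mx11_scalar.
set KA := kermx A.
have KA0 : KA *m A = 0 by rewrite mulmx_ker.
have uA' : u *m A' = 0.
  rewrite /A' !mulmxDr mulmxN !mulmxA !mx1 huv hA !mul_scalar_mx scale1r scale0r.
  by rewrite mul0mx addr0 subrr.
have vA' : v *m A' = 0.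
  rewrite /A' !mulmxDr mulmxN !mulmxA !mx1 hvu hA !mul_scalar_mx scaleN1r scale0r.
  by rewrite mul0mx subr0 mulNmx subrr.
have KA' : KA *m A' = 0.
  rewrite /A' !mulmxDr mulmxN !mulmxA KA0 !mul0mx.
  by rewrite subrr addr0.
have h1 : ((KA + u + v)%MS <= kermx A')%MS.
  by rewrite !addsmx_sub !sub_kermx KA' uA' vA' !eqxx.
have h2 : (kermx A' <= (KA + u + v)%MS)%MS.
  set X := kermx A'.
  have XA' : X *m A' = 0 by rewrite mulmx_ker.
  set Z := X - (X *m cv) *m u + (X *m cu) *m v.
  have ZK : (Z <= KA)%MS.
    rewrite sub_kermx; apply/eqP; rewrite -XA' /Z /A' !mulmxDl !mulmxDr !mulNmx !mulmxN.
    by rewrite !mulmxA.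
  have -> : X = Z + (X *m cv) *m u - (X *m cu) *m v.
    by rewrite /Z addrAC addrK subrK.
  rewrite -[X in (_ <= X)%MS]addsmxA.
  rewrite -addrA; apply: addmx_sub_adds => //.
  apply: addmx_sub_adds; first by rewrite submxMl.
  by rewrite (eqmx_opp ((X *m cu) *m v)) submxMl.
have sc0 : forall c : F, c != 0 -> (c%:M : 'M_1) != 0.
  by move=> c hc; apply/eqP => /matrixP /(_ 0 0); rewrite !mxE eqxx mulr1n; exact/eqP.
have rKA' : \rank (kermx A') = (\rank KA).+2.
  have -> : \rank (kermx A') = \rank (KA + u + v)%MS.
    by apply/eqmx_rank; rewrite h1 h2.
  rewrite (@rank_step _ _ _ _ _ _ (A *m u^T)); last first.
    by rewrite mulmxA mx1 hvu sc0 // oppr_eq0 oner_eq0.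
    rewrite addsmxMr addsmx_sub mulmxA KA0 mul0mx sub0mx /=.
    by rewrite mulmxA mx1 hA raddf0 sub0mx.
  rewrite (@rank_step _ _ _ _ _ _ (A *m v^T)) //; last first.
    by rewrite mulmxA mx1 huv sc0 // oner_eq0.
  by rewrite mulmxA KA0 mul0mx sub0mx.
have rA'lt : (\rank A' + 2 = \rank A)%N.
  move: rKA'; rewrite !mxrank_ker.
  have := rank_leq_row A; have := rank_leq_row A'.
  have : (\rank A' <= n)%N by rewrite rank_leq_col.
  have : (\rank A <= n)%N by rewrite rank_leq_col.
  lia.
have rlt : (\rank A' < k)%N by move: rk; rewrite -rA'lt; lia.
have := IH A' rlt hA'; rewrite -rA'lt addn2 /=; by rewrite negbK.
Qed.



Section Q.
Context (F : fieldType) (D : nat) (Q : 'rV[F]_D -> F) (hq : is_quadratic_form Q).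

Lemma Q0 : Q 0 = 0.
Proof. by have := hq.1 0 0; rewrite scale0r expr0n /= mul0r. Qed.

Lemma polar_sym x y : polar Q x y = polar Q y x.
Proof. by rewrite /polar [y + x]addrC addrAC. Qed.

Lemma polarDl x y z : polar Q (x + y) z = polar Q x z + polar Q y z.
Proof. by have := hq.2.1 1 x y z; rewrite scale1r mul1r. Qed.

Lemma polar0l z : polar Q 0 z = 0.
Proof. by apply: (@addrI _ (polar Q 0 z)); rewrite addr0 -polarDl addr0. Qed.

Lemma polarZl a x z : polar Q (a *: x) z = a * polar Q x z.
Proof. by have := hq.2.1 a x 0 z; rewrite addr0 polar0l addr0. Qed.

Lemma polarDr x y z : polar Q z (x + y) = polar Q z x + polar Q z y.
Proof. by rewrite !(polar_sym z) polarDl. Qed.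

Lemma polarZr a x z : polar Q z (a *: x) = a * polar Q z x.
Proof. by rewrite !(polar_sym z) polarZl. Qed.

Lemma QD x y : Q (x + y) = Q x + Q y + polar Q x y.
Proof. by rewrite /polar; ring. Qed.

Lemma polar_suml (a : 'I_D -> F) (v : 'I_D -> 'rV[F]_D) z :
  polar Q (\sum_(i < D) a i *: v i) z = \sum_(i < D) a i * polar Q (v i) z.
Proof.
apply: (big_rec2 (fun p q => polar Q p z = q)); first exact: polar0l.
by move=> i p q _ <-; rewrite polarDl polarZl.
Qed.

Lemma polar_sumr (a : 'I_D -> F) (v : 'I_D -> 'rV[F]_D) z :
  polar Q z (\sum_(i < D) a i *: v i) = \sum_(i < D) a i * polar Q z (v i).
Proof.
rewrite polar_sym polar_suml; apply: eq_bigr => i _; by rewrite polar_sym.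
Qed.

Definition Jm : 'M[F]_D := \matrix_(i, j) polar Q (delta_mx 0 i) (delta_mx 0 j).

Lemma BIL x y : polar Q x y = bf Jm x y.
Proof.
rewrite {1}(row_sum_delta x) {1}(row_sum_delta y) polar_suml.
under eq_bigr do rewrite polar_sumr.
rewrite /bf !mxE; under [RHS]eq_bigr do rewrite !mxE mulr_suml.
rewrite exchange_big /=; apply: eq_bigr => i _; rewrite mulr_sumr; apply: eq_bigr => k _.
by rewrite !mxE; ring.
Qed.

End Q.



Lemma bf_entry (F : fieldType) m p n (X : 'M[F]_(m, n)) (Y : 'M[F]_(p, n)) (A : 'M_n) i j :
  (X *m A *m Y^T) i j = bf A (row i X) (row j Y).
Proof. by rewrite /bf tr_row colE mulmxA -colE -!row_mul !mxE. Qed.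

Definition perp (F : fieldType) n (J : 'M[F]_n) m (X : 'M[F]_(m, n)) := kermx (J *m X^T).

Section Perp.
Context (F : fieldType) (n : nat) (J : 'M[F]_n) (Jsym : J^T = J) (Ju : J \in unitmx).

Lemma perpE m p (X : 'M[F]_(m, n)) (Y : 'M[F]_(p, n)) :
  (Y <= perp J X)%MS = (Y *m J *m X^T == 0).
Proof. by rewrite /perp sub_kermx mulmxA. Qed.

Lemma perpC m p (X : 'M[F]_(m, n)) (Y : 'M[F]_(p, n)) :
  (Y <= perp J X)%MS = (X <= perp J Y)%MS.
Proof.
by rewrite !perpE -trmx_eq0 !trmx_mul trmxK Jsym mulmxA.
Qed.

Lemma perp_rank m (X : 'M[F]_(m, n)) : \rank (perp J X) = (n - \rank X)%N.
Proof.
rewrite /perp mxrank_ker -mxrank_tr trmx_mul trmxK mxrankMfree //.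
by rewrite row_free_unit unitmx_tr.
Qed.

Lemma perpS m p (X : 'M[F]_(m, n)) (Y : 'M[F]_(p, n)) :
  (X <= Y)%MS -> (perp J Y <= perp J X)%MS.
Proof. by move=> sXY; rewrite perpC (submx_trans sXY) // -perpC. Qed.

Lemma perp_eqmx m p (X : 'M[F]_(m, n)) (Y : 'M[F]_(p, n)) :
  (X :=: Y)%MS -> (perp J X :=: perp J Y)%MS.
Proof. by move=> eXY; apply/eqmxP; rewrite !perpS // eXY. Qed.

Lemma perpK m (X : 'M[F]_(m, n)) : (perp J (perp J X) :=: X)%MS.
Proof.
have sX : (X <= perp J (perp J X))%MS by rewrite -perpC.
have e : \rank (perp J (perp J X)) = \rank X.
  rewrite !perp_rank subKn //; exact: rank_leq_col.
have /eqmxP h : (X == perp J (perp J X))%MS.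
  by rewrite -(mxrank_leqif_eq sX) e.
exact: eqmx_sym.
Qed.

End Perp.
Section Perp2.
Context (F : fieldType) (n : nat) (J : 'M[F]_n) (Jsym : J^T = J) (Ju : J \in unitmx).
Lemma perp_adds m p (X : 'M[F]_(m, n)) (Y : 'M[F]_(p, n)) :
  (perp J (X + Y)%MS :=: perp J X :&: perp J Y)%MS.
Proof.
apply/eqmxP; apply/andP; split.
  rewrite sub_capmx; apply/andP; split; apply: (perpS Jsym); [exact: addsmxSl | exact: addsmxSr].
rewrite (perpC Jsym) addsmx_sub; apply/andP; split; rewrite -(perpC Jsym).
  exact: capmxSl.
exact: capmxSr.
Qed.
End Perp2.



Lemma sqrt_ex (F : fieldType) : (2 \in [pchar F])%N -> finite_or_alg_closed F ->
  forall c : F, exists a, a ^+ 2 = c.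
Proof.
move=> h2 [[s hs]|hc] c; last first.
  have [a ha] := hc 2%N (fun i => if i == 0%N then c else 0) isT.
  by exists a; rewrite ha big_ord_recl big_ord1 /= expr0 mulr1 mul0r addr0.
set s' := undup s.
have inj : injective (fun x : F => x ^+ 2).
  move=> x y /= hxy.
  have e : (x - y) ^+ 2 = (x ^+ 2 - y ^+ 2) + (y ^+ 2 - x * y) * 2%:R by ring.
  move: e; rewrite (pcharf0 h2) mulr0 addr0 hxy subrr => /eqP.
  by rewrite sqrf_eq0 subr_eq0 => /eqP.
have u : uniq (map (fun x : F => x ^+ 2) s') by rewrite (map_inj_uniq inj) undup_uniq.
have sub : {subset map (fun x : F => x ^+ 2) s' <= s'} by move=> z _; rewrite mem_undup hs.
have [_ eqs] := uniq_min_size u sub (eq_leq (esym (size_map _ _))).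
have : c \in map (fun x : F => x ^+ 2) s' by rewrite eqs mem_undup hs.
by case/mapP => a _ ->; exists a.
Qed.

Lemma even_half n : ~~ odd n -> n = (n./2 + n./2)%N.
Proof. by move=> h; have := odd_double_half n; rewrite (negbTE h) add0n addnn. Qed.

Lemma J_unit (F : fieldType) (D : nat) (Q : 'rV[F]_D -> F) :
  (2 \in [pchar F])%N -> finite_or_alg_closed F -> ~~ odd D ->
  is_quadratic_form Q -> qf_nondegenerate Q -> Jm Q \in unitmx.
Proof.
move=> h2 hf hD hq hnd.
set J := Jm Q.
have Jalt : forall z, bf J z z = 0.
  move=> z; rewrite -BIL // /polar.
  have -> : z + z = 0 by rewrite -mulr2n -scaler_nat (pcharf0 h2) scale0r.
  by rewrite Q0 // sub0r -opprD -mulr2n -mulr_natr (pcharf0 h2) mulr0 oppr0.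
have rJ := alt_even Jalt.
have rad : forall w, w *m J = 0 -> in_radical Q w.
  by move=> w hw y; rewrite BIL // /bf hw mul0mx mxE.
rewrite -row_free_unit /row_free.
have hk : \rank (kermx J) = (D - \rank J)%N by rewrite mxrank_ker.
have rJD := rank_leq_col J.
case: (posnP (\rank (kermx J))) => [k0|kpos].
  apply/eqP; lia.
exfalso.
have k2 : (1 < \rank (kermx J))%N.
  have := even_half hD; have := even_half rJ; lia.
set B := row_base (kermx J).
pose i0 : 'I_(\rank (kermx J)) := Ordinal kpos.
pose i1 : 'I_(\rank (kermx J)) := Ordinal k2.
have BJ : forall i, row i B *m J = 0.
  by move=> i; apply/eqP; rewrite -sub_kermx (submx_trans (row_sub _ _)) // eq_row_base.
have comb : forall w : 'rV_(\rank (kermx J)), w *m B = 0 -> w = 0.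
  by move=> w /eqP; rewrite mulmx_free_eq0 ?row_base_free // => /eqP.
set u := row i0 B; set v := row i1 B.
have u0 : u != 0.
  apply/eqP=> h; have := comb (delta_mx 0 i0); rewrite -rowE -/u h => /(_ erefl).
  by move/matrixP/(_ 0 i0); rewrite !mxE !eqxx /=; apply/eqP; exact: oner_neq0.
have Qu : Q u != 0.
  apply/eqP => h; move/eqP: u0; apply; apply: hnd; [exact: (rad _ (BJ _)) | exact: (rad 0 (mul0mx _ _)) | by rewrite h Q0].
have [a ha] := sqrt_ex h2 hf (- Q v / Q u).
set w := a *: u + v.
have wJ : w *m J = 0 by rewrite mulmxDl -scalemxAl /u /v !BJ scaler0 addr0.
have Qw : Q w = 0.
  rewrite /w QD // hq.1 ha polarZl // BIL // /bf BJ mul0mx mxE mulr0 addr0 divfK //.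
  by rewrite addNr.
have : w = 0 by apply: hnd; [exact: (rad _ wJ) | exact: (rad 0 (mul0mx _ _)) | by rewrite Qw Q0].
rewrite /w /u /v !rowE scalemxAl -mulmxDl => /comb /matrixP /(_ 0 i1).
by rewrite !mxE !eqxx /= mulr1n mulr0 add0r => /eqP; rewrite oner_eq0.
Qed.



Lemma kerco (F : fieldType) q p (Z : 'M[F]_(q, p)) : (kermx (cokermx Z) :=: Z)%MS.
Proof.
apply/eqmxP/andP; split; first by rewrite submxE mulmx_ker.
by rewrite sub_kermx -submxE.
Qed.

Lemma PRE (F : fieldType) m n p q (X : 'M[F]_(m, n)) (M : 'M_(n, p)) (Z : 'M_(q, p)) :
  (\rank (X :&: kermx (M *m cokermx Z)) + \rank (X *m M) = \rank X + \rank (X *m M :&: Z))%N.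
Proof.
have h1 := mxrank_mul_ker X (M *m cokermx Z).
have h2 := mxrank_mul_ker (X *m M) (cokermx Z).
rewrite mulmxA in h1; rewrite (cap_eqmx (eqmx_refl _) (kerco Z)) in h2.
lia.
Qed.


Theorem mainTheorem10 (F : fieldType) (D : nat) (Q : 'rV[F]_D -> F) (N : 'M[F]_D) :
  (2 \in [pchar F])%N ->
  finite_or_alg_closed F ->
  ~~ odd D ->
  is_quadratic_form Q ->
  qf_nondegenerate Q ->
  (exists S0 : 'M[F]_D, \rank S0 = D./2 /\ forall v : 'rV[F]_D, (v <= S0)%MS -> Q v = 0) ->
  in_tildeM Q N ->
  forall S : 'M[F]_D,
    \rank S = D./2 ->
    (forall v : 'rV[F]_D, (v <= S)%MS -> Q v = 0) ->
    (\rank S - \rank (S :&: S *m (1%:M + N))%MS = \rank (kermx N) %[mod 2])%N.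
Proof.
move=> h2 hf hD hq hnd _ [_ hQN] S rS hS.
set J := Jm Q.
have Ju : J \in unitmx := J_unit h2 hf hD hq hnd.
have Jsym : J^T = J by apply/matrixP => i j; rewrite !mxE polar_sym.
have Eb : forall x y, polar Q x y = bf J x y := BIL hq.
set G := 1%:M + N.
have QG : forall x, Q (x *m G) = Q x.
  by move=> x; rewrite mulmxDr mulmx1 QD // hQN subrK.
have OG : forall x y, polar Q (x *m G) (y *m G) = polar Q x y.
  by move=> x y; rewrite /polar -mulmxDl !QG.
have GJG : G *m J *m G^T = J.
  apply/matrixP => i j; rewrite bf_entry !rowE -Eb OG /J /Jm mxE //.
have Gu : G \in unitmx.
  have h : G *m (J *m G^T *m invmx J) = 1%:M by rewrite !mulmxA GJG mulmxV.
  by case: (mulmx1_unit h).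
have KN : (kermx N <= perp J N)%MS.
  rewrite perpE; apply/eqP/matrixP => i j; rewrite bf_entry mxE -Eb.
  set y := row i (kermx N).
  have yN : y *m N = 0 by rewrite /y -row_mul mulmx_ker row0.
  have := OG y (delta_mx 0 j); rewrite /G !mulmxDr !mulmx1 yN addr0 polarDr // rowE.
  by rewrite -[RHS]addr0 => /addrI.
have rKN : \rank (kermx N) = (D - \rank N)%N by rewrite mxrank_ker.
have rND : (\rank N <= D)%N by exact: rank_leq_col.
have perpN : (perp J N :=: kermx N)%MS.
  apply/eqmx_sym/eqmxP; rewrite -(mxrank_leqif_eq KN) perp_rank // rKN //.
have perpKN : (perp J (kermx N) :=: N)%MS.
  exact: eqmx_trans (perp_eqmx Jsym (eqmx_sym perpN)) (perpK Jsym Ju N).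
have hSS : (S <= perp J S)%MS.
  rewrite perpE; apply/eqP/matrixP => i j; rewrite bf_entry mxE -Eb /polar.
  by rewrite !hS ?row_sub ?addmx_sub ?row_sub // !subr0.
have perpS : (perp J S :=: S)%MS.
  apply/eqmx_sym/eqmxP; rewrite -(mxrank_leqif_eq hSS) perp_rank // rS.
  apply/eqP; have := even_half hD; lia.
set S' := (S :&: N)%MS.
set X := (S + kermx N)%MS.
have perpX : (perp J X :=: S')%MS.
  exact: eqmx_trans (perp_adds Jsym S (kermx N)) (cap_eqmx perpS perpKN).
have rX : (\rank X + \rank S' = D)%N.
  have := perp_rank Ju X; rewrite perpX => ->; have := rank_leq_col X; lia.
set Y' := kermx (N *m cokermx S').
have S'N : (S' <= N)%MS by exact: capmxSr.
have Y'N : (Y' *m N :=: S')%MS.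
  apply/eqmxP/andP; split; first by rewrite submxE -mulmxA mulmx_ker.
  have -> : S' = S' *m pinvmx N *m N by rewrite mulmxKpV.
  by rewrite submxMr // sub_kermx mulmxA (mulmxKpV S'N) -submxE.
have rY' : (\rank Y' + \rank N = D + \rank S')%N.
  have := PRE 1%:M N S'; rewrite capmxC capmx1 mul1mx mxrank1.
  by rewrite (capmx_idPr S'N).
have rXY := PRE X N S'.
have XN : (X *m N :=: S *m N)%MS.
  apply: eqmx_trans (addsmxMr _ _ _) _; rewrite mulmx_ker; exact: addsmx0.
have XNS : (X *m N :&: S' :=: S *m N :&: S)%MS.
  apply: eqmx_trans (cap_eqmx XN (eqmx_refl _)) _; rewrite /S' capmxA.
  by apply/capmx_idPl; rewrite (submx_trans (capmxSl _ _)) // submxMl.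
rewrite XN XNS -/Y' in rXY.
set Amat := Y' *m J *m (Y' *m N)^T.
have pY'N : (perp J (Y' *m N) :=: X)%MS.
  exact: eqmx_trans (perp_eqmx Jsym Y'N)
         (eqmx_trans (perp_eqmx Jsym (eqmx_sym perpX)) (perpK Jsym Ju X)).
have rA : (\rank Amat + \rank (Y' :&: X) = \rank Y')%N.
  have h := mxrank_mul_ker Y' (J *m (Y' *m N)^T).
  change (\rank (Y' *m (J *m (Y' *m N)^T)) + \rank (Y' :&: perp J (Y' *m N)) = \rank Y')%N in h.
  by rewrite (cap_eqmx (eqmx_refl Y') pY'N) mulmxA in h.
rewrite capmxC in rA.
have Aalt : forall z, bf Amat z z = 0.
  move=> z; rewrite /bf.
  have -> : z *m Amat *m z^T = (z *m Y') *m J *m ((z *m Y') *m N)^T.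
    by rewrite /Amat !trmx_mul !mulmxA.
  rewrite -/(bf J _ _) -Eb.
  have : Q ((z *m Y') *m N) = 0.
    apply: hS; rewrite -mulmxA (submx_trans (submxMl _ _)) // Y'N.
    exact: capmxSl.
  by rewrite hQN => /eqP; rewrite oppr_eq0 => /eqP.
have evA := alt_even Aalt.
have hcapG := mxrank_sum_cap S (S *m G).
have rSG : \rank (S *m G) = \rank S by rewrite mxrankMfree // row_free_unit.
have eSG : (S + S *m G :=: S + S *m N)%MS.
  apply/eqmxP/andP; split; rewrite addsmx_sub addsmxSl /=.
    by rewrite /G mulmxDr mulmx1 addmx_sub_adds.
  have -> : S *m N = - S + S *m G by rewrite /G mulmxDr mulmx1 addKr.
  by rewrite addmx_sub_adds // eqmx_opp.
rewrite eSG in hcapG.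
have hcapN := mxrank_sum_cap S (S *m N).
rewrite (capmxC S (S *m N)) in hcapN.
have := even_half hD; have := even_half evA.
rewrite rKN.
have hle : (\rank S <= \rank (S + S *m N))%N by apply: mxrankS; exact: addsmxSl.
move: (\rank Amat) (\rank S) (\rank (S :&: S *m G)) (\rank (S *m G)) (\rank (S + S *m N)) (\rank (S *m N :&: S)) (\rank (S *m N)) (\rank (X :&: Y')) (\rank X) (\rank Y') (\rank N) (\rank S') evA rSG hcapG hcapN rXY rA rY' rX rND hle.
clear. move=> a s cg sg ssn cn u xy x y n s' ea.
lia.
Qed.
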